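(* Let $S$ be an infinite set and $\mathcal{F}\subseteq 2^S$ a family closed under finite unions (i.e. $A\cup B\in\mathcal{F}$ whenever $A,B\in\mathcal{F}$). Then for all classification problems $\mathbf{A}$ and $\mathbf{B}$ with $\mathbf{B}\leq\mathbf{A}$: if $\mathbf{A}\in \mathit{class}_{|\mathbf{A}|}(\mathcal{F})$, then $\mathbf{B}\in \mathit{class}_{|\mathbf{B}|}(\mathcal{F})$.
   Context: A vector $\mathbf{A}=(A_1,\dots,A_k)$ ($k\ge 1$) of subsets of $S$ has length $|\mathbf{A}|=k$. For vectors $\mathbf{B}=(B_1,\dots,B_m)$ and $\mathbf{A}=(A_1,\dots,A_k)$, $\mathbf{B}\leq\mathbf{A}$ means $1\le m\le k$ and there is an injective $\sigma:\{1,\dots,m\}\to\{1,\dots,k\}$ with $B_i\subseteq A_{\sigma(i)}$ for all $i$. A classification problem is a vector $(A_1,\dots,A_k)$, $k\ge1$, of pairwise disjoint infinite subsets of $S$. An $\mathcal{F}$-partition is a vector $(Q_1,\dots,Q_k)$ of pairwise disjoint sets $Q_i\in\mathcal{F}$ with $Q_1\cup\dots\cup Q_k=S$. $\mathit{class}_k(\mathcal{F})$ is the set of classification problems $\mathbf{A}$ with $|\mathbf{A}|=k$ for which an $\mathcal{F}$-partition $\mathbf{Q}$ with $|\mathbf{Q}|=k$ and $\mathbf{A}\leq\mathbf{Q}$ exists. *)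

(* Defs.v *)
From mathcomp Require Import all_boot.
From mathcomp Require Import boolp classical_sets cardinality.
Set Implicit Arguments. Unset Strict Implicit. Unset Printing Implicit Defensive.
Local Open Scope classical_set_scope.

Definition vec (S : Type) (k : nat) := 'I_k -> set S.

Definition vec_le (S : Type) (m k : nat) (B : vec S m) (A : vec S k) : Prop :=
  (1 <= m)%N /\ (m <= k)%N /\
  exists sigma : 'I_m -> 'I_k, injective sigma /\ forall i, B i `<=` A (sigma i).

Definition classification_problem (S : Type) (k : nat) (A : vec S k) : Prop :=
  (1 <= k)%N /\
  (forall i j, i <> j -> A i `&` A j = set0) /\
  (forall i, ~ finite_set (A i)).

Definition F_partition (S : Type) (F : set (set S)) (k : nat) (Q : vec S k) : Prop :=
  (1 <= k)%N /\
  (forall i, F (Q i)) /\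
  (forall i j, i <> j -> Q i `&` Q j = set0) /\
  (\bigcup_(i in [set: 'I_k]) Q i = [set: S]).

Definition in_class (S : Type) (F : set (set S)) (k : nat) (A : vec S k) : Prop :=
  classification_problem A /\
  exists Q : vec S k, F_partition F Q /\ vec_le A Q.

(* Main.v *)
Require Import Defs.
From mathcomp Require Import all_boot.
From mathcomp Require Import boolp classical_sets cardinality.
Local Open Scope classical_set_scope.

Lemma F_union_seq (S : Type) (F : set (set S)) k (Q : 'I_k -> set S) :
  (forall X Y, F X -> F Y -> F (X `|` Y)) -> (forall j, F (Q j)) ->
  forall s : seq 'I_k, s <> [::] ->
  F (fun x => exists j, j \in s /\ Q j x).
Proof.
move=> HU HQ; elim=> [//|a s IH] _.
case: s IH => [|b s] IH.
  have -> : (fun x => exists j, j \in [:: a] /\ Q j x) = Q a; last exact: HQ.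
  apply: funext => x; apply: propext; split.
    by case=> j []; rewrite inE => /eqP ->.
  by move=> qx; exists a; rewrite inE eqxx.
have -> : (fun x => exists j, j \in [:: a, b & s] /\ Q j x) =
   Q a `|` (fun x => exists j, j \in b :: s /\ Q j x).
  apply: funext => x; apply: propext; split.
    case=> j []; rewrite inE => /orP [/eqP ->|js qx]; [by left|by right; exists j].
  case=> [qa|[j [js qx]]]; first by exists a; rewrite inE eqxx.
  by exists j; rewrite inE js orbT.
by apply: HU => //; apply: IH.
Qed.

Theorem proposition2p2 (S : Type) (F : set (set S)) :
  ~ finite_set [set: S] ->
  (forall X Y, F X -> F Y -> F (X `|` Y)) ->
  forall (k m : nat) (A : vec S k) (B : vec S m),
    classification_problem A -> classification_problem B ->
    vec_le B A ->
    in_class F A -> in_class F B.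
Proof.
move=> _ HU k m A B _ cB [m1 [mk [sg [sginj BA]]]] [_ [Q [[k1 [FQ [dQ cQ]]] [_ [_ [tau [tauinj AQ]]]]]]].
split => //.
pose rho := fun i => tau (sg i).
have rhoinj : injective rho by move=> i j /tauinj /sginj.
have BQ : forall i, B i `<=` Q (rho i) by move=> i x /BA /AQ.
case: m B sg sginj BA m1 mk cB rho rhoinj BQ => // m' B sg sginj BA m1 mk cB rho rhoinj BQ.
pose i0 : 'I_m'.+1 := ord0.
pose G := fun j : 'I_k => (j == rho i0) || ~~ `[< exists i, rho i = j >].
pose U := fun x => exists j, j \in filter G (enum 'I_k) /\ Q j x.
have FU : F U.
  apply: F_union_seq => //.
  have : rho i0 \in filter G (enum 'I_k) by rewrite mem_filter /G eqxx mem_enum.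
  by case: (filter _ _).
pose Q' := fun i : 'I_m'.+1 => if i == i0 then U else Q (rho i).
have QU : Q (rho i0) `<=` U.
  by move=> x qx; exists (rho i0); rewrite mem_filter /G eqxx mem_enum.
exists Q'; split; last first.
  split => //; split => //; exists id; split => // i x /BQ.
  rewrite /Q'; case: eqP => [->|_] //; exact: QU.
split => //; split.
  by move=> i; rewrite /Q'; case: eqP.
split.
  have key : forall i, i != i0 -> U `&` Q (rho i) = set0.
    move=> i ni; apply/seteqP; split => // x [[j [js qjx]] qx].
    have ej : j = rho i.
      apply: contrapT => nj; have := dQ _ _ nj.
      by move/seteqP => [+ _] => /(_ x (conj qjx qx)).
    move: js; rewrite mem_filter /G ej => /andP [/orP [/eqP/rhoinj ei|nr] _].
      by move: ni; rewrite ei eqxx.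
    by move/negP: nr; apply; apply: asboolT; exists i.
  move=> i j nij; rewrite /Q'.
  case: (eqVneq i i0) => [ei|ni]; case: (eqVneq j i0) => [ej|nj].
  - by case: nij; rewrite ei ej.
  - by rewrite key.
  - by rewrite setIC key.
  - by apply: dQ => /rhoinj.
apply/seteqP; split => // x _.
have : (\bigcup_(i in [set: 'I_k]) Q i) x by rewrite cQ.
case=> j _ qx.
case: (pselect (exists i, rho i = j)) => [[i ei]|nr].
  case: (eqVneq i i0) => [e|ne].
    by exists i0 => //; rewrite /Q' eqxx; apply: QU; rewrite -e ei.
  by exists i => //; rewrite /Q' (negPf ne) ei.
exists i0 => //; rewrite /Q' eqxx; exists j; split => //.
rewrite mem_filter mem_enum andbT /G; apply/orP; right; apply/negP => /asboolW.
exact: nr.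
Qed.
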